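(* Let $X$ be a nonempty set, let $w$ be a convex metric modular on $X$, let $x_0\in X$ and let $X_w^*=\{x\in X:\exists\,\lambda>0,\ w_\lambda(x,x_0)<\infty\}$. Let $T\colon X_w^*\to X_w^*$ be a map and let $k\in(0,1)$, $\lambda_0>0$ be such that $w_{k\lambda}(Tx,Ty)\le w_\lambda(x,y)$ for all $0<\lambda\le\lambda_0$ and all $x,y\in X_w^*$. Let $0<\lambda<\lambda_0$ and let $\lambda_1,\lambda_2>0$ with $\lambda_1+\lambda_2=(1-k)\lambda$. Then $$w_\lambda(x,y)\le \frac{\lambda_1 w_{\lambda_1}(x,Tx)+\lambda_2 w_{\lambda_2}(y,Ty)}{\lambda(1-k)}$$ for every $x,y\in X_w^*$ such that $w_\lambda(x,y)<\infty$.
   Context: A metric modular on a nonempty set $X$ is a function $w\colon(0,\infty)\times X\times X\to[0,\infty]$, written $(\lambda,x,y)\mapsto w_\lambda(x,y)$, such that for all $x,y,z\in X$: (1) $w_\lambda(x,y)=0$ for all $\lambda>0$ if and only if $x=y$; (2) $w_\lambda(x,y)=w_\lambda(y,x)$ for all $\lambda>0$; (3) $w_{\lambda+\mu}(x,y)\le w_\lambda(x,z)+w_\mu(y,z)$ for all $\lambda,\mu>0$. The modular $w$ is convex if it satisfies $w_{\lambda+\mu}(x,y)\le \frac{\lambda}{\lambda+\mu}w_\lambda(x,z)+\frac{\mu}{\lambda+\mu}w_\mu(z,y)$ for all $\lambda,\mu>0$ and all $x,y,z\in X$. Arithmetic is in $[0,\infty]$. *)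

(* Defs.v *)
From HB Require Import structures.
From mathcomp Require Import all_boot all_order all_algebra.
From mathcomp Require Import boolp classical_sets reals constructive_ereal ereal.
Set Implicit Arguments. Unset Strict Implicit. Unset Printing Implicit Defensive.
Import Order.TTheory GRing.Theory Num.Theory.
Local Open Scope ring_scope.
Local Open Scope ereal_scope.

(* A modular w : (0,oo) x X x X -> [0,oo]; modelled as a function on R whose
   values for lambda <= 0 are irrelevant. *)
Definition metric_modular (R : realType) (X : Type) (w : R -> X -> X -> \bar R) : Prop :=
  (forall (l : R) x y, (0 < l)%R -> 0 <= w l x y) /\
  (forall x y, (forall l : R, (0 < l)%R -> w l x y = 0) <-> x = y) /\
  (forall (l : R) x y, (0 < l)%R -> w l x y = w l y x) /\
  (forall (l m : R) x y z, (0 < l)%R -> (0 < m)%R ->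
      w (l + m)%R x y <= w l x z + w m y z).

Definition convex_modular (R : realType) (X : Type) (w : R -> X -> X -> \bar R) : Prop :=
  forall (l m : R) x y z, (0 < l)%R -> (0 < m)%R ->
    w (l + m)%R x y <= (l / (l + m))%:E * w l x z + (m / (l + m))%:E * w m z y.

Definition modular_set (R : realType) (X : Type) (w : R -> X -> X -> \bar R) (x0 : X)
  : set X := [set x | exists l : R, (0 < l)%R /\ w l x x0 < +oo].

(* Main.v *)
Require Import Defs.
From HB Require Import structures.
From mathcomp Require Import all_boot all_order all_algebra.
From mathcomp Require Import boolp classical_sets reals constructive_ereal ereal.
From mathcomp Require Import ring lra.
Import Order.TTheory GRing.Theory Num.Theory.
Local Open Scope ring_scope.
Local Open Scope ereal_scope.

Lemma pmuly (R : realType) (r : R) : (0 < r)%R -> r%:E * +oo = +oo.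
Proof. by move=> r0; rewrite mulry gtr0_sg // mul1e. Qed.

Theorem proposition4p3 (R : realType) (X : Type) (w : R -> X -> X -> \bar R) (x0 : X)
  (T : X -> X) (k lam0 lam lam1 lam2 : R) :
  metric_modular w -> convex_modular w ->
  (forall x, modular_set w x0 x -> modular_set w x0 (T x)) ->
  (0 < k)%R -> (k < 1)%R -> (0 < lam0)%R ->
  (forall (l : R) x y, (0 < l)%R -> (l <= lam0)%R ->
     modular_set w x0 x -> modular_set w x0 y ->
     w (k * l)%R (T x) (T y) <= w l x y) ->
  (0 < lam)%R -> (lam < lam0)%R -> (0 < lam1)%R -> (0 < lam2)%R ->
  (lam1 + lam2 = (1 - k) * lam)%R ->
  forall x y, modular_set w x0 x -> modular_set w x0 y -> w lam x y < +oo ->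
    w lam x y <= ((lam * (1 - k))^-1)%:E *
                   (lam1%:E * w lam1 x (T x) + lam2%:E * w lam2 y (T y)).
Proof.
move=> [w0 [_ [wsym _]]] cvx Tst k0 k1 l00 contr l0 ll0 l10 l20 hsum x y xs ys fin.
set m := (k * lam + lam2)%R.
have m0 : (0 < m)%R by rewrite /m; apply: addr_gt0 => //; exact: mulr_gt0.
have hlam : lam = (lam1 + m)%R by rewrite /m; lra.
have h1 := cvx lam1 m x y (T x) l10 m0.
rewrite -hlam in h1.
have h2 := cvx (k * lam)%R lam2 (T x) y (T y) (mulr_gt0 k0 l0) l20.
rewrite -/m (wsym lam2 (T y) y) // in h2.
have h3 := contr lam x y l0 (ltW ll0) xs ys.
have W0 := w0 lam x y l0.
have A0 := w0 lam1 x (T x) l10.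
have B0 := w0 lam2 y (T y) l20.
have C0 := w0 (k * lam)%R (T x) (T y) (mulr_gt0 k0 l0).
have D0 := w0 m (T x) y m0.
have pI : (0 < (lam * (1 - k))^-1)%R by rewrite invr_gt0; apply: mulr_gt0 => //; lra.
have sI := pmuly _ _ pI.
have s1 := pmuly _ _ l10.
have s2 := pmuly _ _ l20.
have s3 : (lam1 / lam)%:E * +oo = +oo by apply: pmuly; exact: divr_gt0.
have s4 : (m / lam)%:E * +oo = +oo by apply: pmuly; exact: divr_gt0.
have s5 : (lam2 / m)%:E * +oo = +oo by apply: pmuly; exact: divr_gt0.
have s6 : (k * lam / m)%:E * +oo = +oo by apply: pmuly; apply: divr_gt0 => //; exact: mulr_gt0.
move: h1 h2 h3 fin W0 A0 B0 C0 D0.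
case: (w lam x y) => [r| |] //; case: (w lam1 x (T x)) => [a| |] //;
  case: (w lam2 y (T y)) => [b| |] //;
  case: (w (k * lam)%R (T x) (T y)) => [c| |] //;
  case: (w m (T x) y) => [d| |] //;
  rewrite ?sI ?s1 ?s2 ?s3 ?s4 ?s5 ?s6 ?mul1e ?addye ?addey ?leey //.
all: rewrite ?sI ?leey //.
rewrite -!EFinM -!EFinD !lee_fin => H1 H2 H3 _ r0 a0 b0 c0 d0.
have H1' : (lam * r <= lam1 * a + m * d)%R.
  have -> : (lam1 * a + m * d = lam * (lam1 / lam * a + m / lam * d))%R.
    by field; rewrite gt_eqF.
  by rewrite ler_pM2l.
have H2' : (m * d <= k * lam * c + lam2 * b)%R.
  have -> : (k * lam * c + lam2 * b = m * (k * lam / m * c + lam2 / m * b))%R.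
    by field; rewrite gt_eqF.
  by rewrite ler_pM2l.
have H3' : (k * lam * c <= k * lam * r)%R by rewrite ler_pM2l //; exact: mulr_gt0.
rewrite ler_pdivlMl; last by apply: mulr_gt0 => //; lra.
lra.
Qed.
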